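(* Let $K=\mathbb{F}_{q^n}$, let $\sigma$ be an automorphism of $K$ of order $n>1$ with fixed field $F=\mathbb{F}_q$, and let $f\in K[t;\sigma]$ be monic of degree $m\ge 2$, irreducible and not right-invariant, with $n\ge m-1$. Suppose the multiplicative loop $L_f$ of $S_f$ has nucleus $K^\times\cdot 1$. Then $L_f$ has at least $s=(q^n-1)/(q-1)$ inner automorphisms extending $\mathrm{id}_{K^\times}$. These form a cyclic subgroup of $\mathrm{Aut}(L_f)$ isomorphic to $\ker(N_{K/F})$, and a cyclic subgroup of middle inner mappings in $\mathrm{Inn}(L_f)$ isomorphic to $\ker(N_{K/F})$.
   Context: $R=K[t;\sigma]$ is the twisted polynomial ring ($tb=\sigma(b)t$ for $b\in K$). $f$ is irreducible if it has no factorization into two factors of smaller degree; right-invariant if $Rf$ is a two-sided ideal. $S_f$ is the set of elements of $R$ of degree $<m$ with multiplication $g\circ h=gh\bmod_r f$ (remainder of right division by $f$), a proper semifield; $L_f=S_f\setminus\{0\}$ is its multiplicative loop. The nucleus of a loop $L$ is the set of $x$ with $(xy)z=x(yz)$, $(yx)z=y(xz)$, $(yz)x=y(zx)$ for all $y,z\in L$. For $x\in L$, $L_x(y)=xy$, $R_x(y)=yx$; the middle inner mapping is $T_x=L_x^{-1}R_x$. The multiplication group $\mathrm{Mlt}(L)$ is generated by all $L_x,R_x$, and $\mathrm{Inn}(L)=\{g\in\mathrm{Mlt}(L): g(1)=1\}$. An inner automorphism of $L_f$ is a loop automorphism of the form $x\mapsto (c_lx)c$ for some $c\in L_f$ with left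 inverse $c_l$ (the restriction of an inner automorphism of the algebra $S_f$). $N_{K/F}$ is the field norm $K^\times\to F^\times$. *)

(* Defs.v *)
From HB Require Import structures.
From mathcomp Require Import all_boot all_order all_algebra all_fingroup all_solvable.
Set Implicit Arguments. Unset Strict Implicit. Unset Printing Implicit Defensive.
Import GRing.Theory.
Local Open Scope ring_scope.

(* Elements of R = K[t;sigma] are represented by their coefficient sequences,
   i.e. by {poly K} (the additive structure coincides); the multiplication is
   the twisted one:  (a t^i)(b t^j) = a sigma^i(b) t^(i+j). *)
Section Twisted.
Variable K : fieldType.
Variable sigma : K -> K.

Definition skmul (p q : {poly K}) : {poly K} :=
  \sum_(i < size p) \sum_(j < size q)
     (p`_i * iter i sigma q`_j) *: 'X^(i + j).

Definition skmodr_step (f h : {poly K}) : {poly K} :=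
  if (size h < size f)%N then h
  else h - skmul (lead_coef h *: 'X^(size h - size f)) f.

(* remainder of right division of g by the monic f: g = k f + r, deg r < deg f *)
Definition skmodr (f g : {poly K}) : {poly K} := iter (size g) (skmodr_step f) g.

Definition sk_irreducible (f : {poly K}) : Prop :=
  ~ exists g h : {poly K},
      [/\ f = skmul g h, (size g < size f)%N & (size h < size f)%N].

(* f right-invariant: R f is a two-sided ideal, i.e. f g \in R f for all g *)
Definition right_invariant (f : {poly K}) : Prop :=
  forall g : {poly K}, exists h : {poly K}, skmul f g = skmul h f.

(* the field norm N_{K/F}, F = Fix(sigma), sigma of order n generating Gal(K/F) *)
Definition sknorm (n : nat) (a : K) : K := \prod_(i < n) iter i sigma a.

Definition sf_mul (f : {poly K}) (m : nat) (x y : 'rV[K]_m) : 'rV[K]_m :=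
  poly_rV (skmodr f (skmul (rVpoly x) (rVpoly y))).

Definition sf_const (m : nat) (a : K) : 'rV[K]_m := poly_rV a%:P.
Definition sf_one (m : nat) : 'rV[K]_m := sf_const m 1.
End Twisted.

Definition kerN (K : finFieldType) (sigma : K -> K) (n : nat) : {set {unit K}} :=
  [set u : {unit K} | sknorm sigma n (val u) == 1].

(* Bijections of L_f are encoded as permutations of S_f fixing 0. *)
Section Loop.
Variable K : fieldType.
Variable m : nat.
Local Notation S := 'rV[K]_m.
Variable mul : S -> S -> S.
Variable one : S.

Definition in_nucleus (x : S) : Prop :=
  x != 0 /\
  forall y z : S, y != 0 -> z != 0 ->
    [/\ mul (mul x y) z = mul x (mul y z),
        mul (mul y x) z = mul y (mul x z) &
        mul (mul y z) x = mul y (mul z x)].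

Definition loop_aut (p : S -> S) : Prop :=
  p 0 = 0 /\ forall x y : S, x != 0 -> y != 0 -> p (mul x y) = mul (p x) (p y).

Definition inner_aut (p : S -> S) : Prop :=
  loop_aut p /\
  exists c cl : S, [/\ c != 0, cl != 0, mul cl c = one &
                      forall x : S, x != 0 -> p x = mul (mul cl x) c].

(* middle inner mapping T_x = L_x^{-1} R_x, i.e. x * T_x(y) = y * x *)
Definition mid_inner (p : S -> S) : Prop :=
  exists x : S, x != 0 /\ forall y : S, y != 0 -> mul x (p y) = mul y x.
End Loop.

Section Mlt.
Variable K : finFieldType.
Variable m : nat.
Local Notation S := 'rV[K]_m.
Variable mul : S -> S -> S.
Variable one : S.

(* the (at most one) permutation of S_f agreeing with L_x, resp. R_x *)
Definition Lset (x : S) : {set {perm S}} := [set p : {perm S} | [forall y, p y == mul x y]].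
Definition Rset (x : S) : {set {perm S}} := [set p : {perm S} | [forall y, p y == mul y x]].

Definition Mlt : {set {perm S}} := (<<\bigcup_(x | x != 0) (Lset x :|: Rset x)>>)%g.
Definition Inn : {set {perm S}} := [set g in Mlt | g one == one].
End Mlt.

(* Main.v *)
Require Import Defs.
From HB Require Import structures.
From mathcomp Require Import all_boot all_order all_algebra all_fingroup all_solvable.
From mathcomp Require Import ring.
Set Implicit Arguments. Unset Strict Implicit. Unset Printing Implicit Defensive.
Import GRing.Theory.
Local Open Scope ring_scope.

Section Basic.
Variables (K : finFieldType) (sigma : {rmorphism K -> K}).

Lemma iterM i x y : iter i sigma (x * y) = iter i sigma x * iter i sigma y.
Proof. by elim: i => //= i ->; rewrite rmorphM. Qed.
Lemma iter0 i : iter i sigma 0 = 0.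
Proof. by elim: i => //= i ->; rewrite rmorph0. Qed.
Lemma iter1 i : iter i sigma 1 = 1.
Proof. by elim: i => //= i ->; rewrite rmorph1. Qed.
Lemma iterV i x : iter i sigma x^-1 = (iter i sigma x)^-1.
Proof. by elim: i => //= i ->; rewrite fmorphV. Qed.
Lemma iter_eq0 i x : (iter i sigma x == 0) = (x == 0).
Proof. by elim: i => //= i <-; rewrite fmorph_eq0. Qed.

Variables (f : {poly K}) (m : nat).
Hypothesis hf : size f = m.+1.

Lemma skmodr_small (g : {poly K}) : (size g < size f)%N -> skmodr sigma f g = g.
Proof.
move=> h; rewrite /skmodr; elim: (size g) => //= k ->.
by rewrite /skmodr_step h.
Qed.

Lemma skmul0l q : skmul sigma 0 q = 0.
Proof. by rewrite /skmul size_poly0 big_ord0. Qed.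
Lemma skmul0r p : skmul sigma p 0 = 0.
Proof. by rewrite /skmul; apply: big1 => i _; rewrite size_poly0 big_ord0. Qed.

Lemma skmulCl a q : skmul sigma a%:P q = a *: q.
Proof.
have [->|a0] := eqVneq a 0; first by rewrite polyC0 skmul0l scale0r.
rewrite /skmul size_polyC a0 big_ord1 /=.
transitivity (a *: \poly_(i < size q) q`_i); last by rewrite coefK.
rewrite poly_def scaler_sumr; apply: eq_bigr => j _.
by rewrite coefC /= add0n scalerA.
Qed.

Lemma skmulCr p a : skmul sigma p a%:P = \poly_(i < size p) (p`_i * iter i sigma a).
Proof.
have [->|a0] := eqVneq a 0.
  rewrite polyC0 skmul0r; apply/polyP => i; rewrite coef0 coef_poly iter0 mulr0.
  by case: ifP.
rewrite /skmul size_polyC a0 poly_def; apply: eq_bigr => i _.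
by rewrite big_ord1 /= coefC /= addn0.
Qed.

Local Notation Mf := (sf_mul sigma f (m:=m)).

Lemma rVconst a : (0 < m)%N -> rVpoly (sf_const (K:=K) m a) = a%:P.
Proof. by move=> hm; rewrite /sf_const poly_rV_K // (leq_trans (size_polyC_leq1 a)). Qed.

Lemma sfCl a y : (0 < m)%N -> Mf (sf_const (K:=K) m a) y = \row_i (a * y 0 i).
Proof.
move=> hm; rewrite /sf_mul rVconst // skmulCl skmodr_small; last first.
  by rewrite hf ltnS (leq_trans (size_scale_leq _ _)) // size_poly.
by apply/rowP => i; rewrite !mxE coefZ coef_rVpoly_ord.
Qed.

Lemma sfCr a y : (0 < m)%N -> Mf y (sf_const (K:=K) m a) = \row_i (y 0 i * iter i sigma a).
Proof.
move=> hm; rewrite /sf_mul rVconst // skmulCr skmodr_small; last first.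
  by rewrite hf ltnS (leq_trans (size_poly _ _)) // size_poly.
apply/rowP => i; rewrite !mxE coef_poly coef_rVpoly_ord; case: ltnP => // h.
by rewrite -coef_rVpoly_ord nth_default // mul0r.
Qed.

Lemma sf0l y : Mf 0 y = 0.
Proof. by rewrite /sf_mul linear0 skmul0l /skmodr size_poly0 /= linear0. Qed.
Lemma sf0r y : Mf y 0 = 0.
Proof. by rewrite /sf_mul linear0 skmul0r /skmodr size_poly0 /= linear0. Qed.

Lemma constE a (i : 'I_m) : sf_const (K:=K) m a 0 i = if i == 0%N :> nat then a else 0.
Proof. by rewrite /sf_const mxE coefC. Qed.

End Basic.

Section Nuc.
Variables (K : finFieldType) (sigma : {rmorphism K -> K}) (f : {poly K}) (m : nat).
Local Notation Mf := (sf_mul sigma f (m:=m)).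

Lemma nuc_all x : in_nucleus Mf x -> forall y z,
    [/\ Mf (Mf x y) z = Mf x (Mf y z),
        Mf (Mf y x) z = Mf y (Mf x z) &
        Mf (Mf y z) x = Mf y (Mf z x)].
Proof.
case=> _ H y z.
have [->|y0] := eqVneq y 0; first by rewrite !(sf0l, sf0r).
have [->|z0] := eqVneq z 0; first by rewrite !(sf0l, sf0r).
exact: H.
Qed.
End Nuc.

Section Scale.
Variables (K : finFieldType) (m : nat).
Definition scr (w : 'I_m -> K) (y : 'rV[K]_m) : 'rV[K]_m := \row_i (w i * y 0 i).
Lemma scr_inj w : (forall i, w i != 0) -> injective (scr w).
Proof.
move=> hw x y /rowP e; apply/rowP => i; have := e i; rewrite !mxE.
exact: mulfI.
Qed.
End Scale.

Section Dedekind.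
Variable K : fieldType.
Lemma dedekind (chi : nat -> K -> K) (k : nat) :
  (forall i x y, chi i (x * y) = chi i x * chi i y) -> (forall i, chi i 1 = 1) ->
  (forall i j, (i < j < k)%N -> exists z, chi i z != chi j z) ->
  forall a : nat -> K,
  (forall y, \sum_(i < k) a i * chi i y = 0) -> forall i, (i < k)%N -> a i = 0.
Proof.
move=> hM h1; elim: k => [|k IH] hd a H i //.
have H' y : \sum_(i < k) a i * chi i y = - (a k * chi k y).
  by apply/eqP; rewrite -addr_eq0; move: (H y); rewrite big_ord_recr => ->.
have wk : forall i j, (i < j < k)%N -> (i < j < k.+1)%N.
  by move=> i' j' /andP[-> /ltnW].
have hd' : forall i j, (i < j < k)%N -> exists z, chi i z != chi j z :=
  fun i j h => hd i j (wk i j h).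
have low j : (j < k)%N -> a j = 0.
  move=> jk; have [z hz] : exists z, chi j z != chi k z by apply: hd; rewrite jk ltnSn.
  pose a' i := a i * (chi i z - chi k z).
  have Ha' y : \sum_(i < k) a' i * chi i y = 0.
    have -> : \sum_(i < k) a' i * chi i y =
        \sum_(i < k) a i * chi i (z * y) - chi k z * \sum_(i < k) a i * chi i y.
      rewrite mulr_sumr -sumrB; apply: eq_bigr => i' _; rewrite hM /a'; ring.
    rewrite !H' hM; ring.
  have := IH hd' a' Ha' j jk; rewrite /a' => /eqP; rewrite mulf_eq0 subr_eq0.
  by rewrite (negbTE hz) orbF => /eqP.
move=> ik; have := H 1; rewrite big_ord_recr /= big1; last by move=> i' _; rewrite (low i' (ltn_ord i')) mul0r.
rewrite add0r h1 mulr1 => ak; move: ik; rewrite ltnS leq_eqVlt => /orP[/eqP -> //|].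
exact: low.
Qed.
End Dedekind.

Section Hilbert.
Variables (K : finFieldType) (sigma : {rmorphism K -> K}).
Definition Nn (i : nat) (a : K) := \prod_(j < i) iter j sigma a.

Lemma NnM i a b : Nn i (a * b) = Nn i a * Nn i b.
Proof. by rewrite /Nn -big_split; apply: eq_bigr => j _; rewrite iterM. Qed.
Lemma Nn1 a : Nn 1 a = a.
Proof. by rewrite /Nn big_ord1. Qed.
Lemma Nn_neq0 i a : a != 0 -> Nn i a != 0.
Proof. by move=> a0; rewrite /Nn prodf_seq_neq0; apply/allP => j _; rewrite iter_eq0. Qed.
Lemma Nn_tele i c : c != 0 -> Nn i (sigma c / c) = iter i sigma c / c.
Proof.
move=> c0; elim: i => [|i IH]; first by rewrite /Nn big_ord0 divff.
rewrite /Nn big_ord_recr /= -/(Nn i _) IH iterM iterV -iterSr iterS.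
have : iter i sigma c != 0 by rewrite iter_eq0.
move: (iter i sigma c) => a a0; field; exact/andP.
Qed.
Lemma NnS i u : u * sigma (Nn i u) = Nn i.+1 u.
Proof. by rewrite /Nn rmorph_prod big_ord_recl /=. Qed.

Variable n : nat.
Hypotheses (hbij : bijective sigma) (hn : (0 < n)%N) (hid : iter n sigma =1 id)
  (hord : forall k, (0 < k < n)%N -> ~ (iter k sigma =1 id)).

Lemma iter_distinct i j : (i < j < n)%N -> exists z, iter i sigma z != iter j sigma z.
Proof.
move=> /andP[ij jn].
case: (boolP [exists z, iter i sigma z != iter j sigma z]) => [/existsP //|hne].
exfalso; have hk : (0 < j - i < n)%N.
  by rewrite subn_gt0 ij /= (leq_ltn_trans (leq_subr i j)).
apply: (hord hk) => x; have [g sg gs] := hbij.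
have hw : forall k, iter k sigma (iter k g x) = x.
  by elim=> //= k IH; rewrite -iterS iterSr gs.
move: hne; rewrite negb_exists => /forallP /(_ (iter i g x)); rewrite negbK => /eqP e.
by rewrite -{1}(hw i) -iterD subnK ?(ltnW ij) // -e hw.
Qed.

Lemma hilbert90 u : Nn n u = 1 -> exists c, c != 0 /\ sigma c / c = u.
Proof.
move=> hN.
have u0 : u != 0.
  apply: contra_eq_neq hN => ->; rewrite /Nn; case: (n) hn => // n' _.
  by rewrite big_ord_recl /= mul0r eq_sym oner_eq0.
case: (boolP [exists y, \sum_(i < n) Nn i u * iter i sigma y != 0]) => [/existsP [y hy]|hne]; last first.
  exfalso.
  have Hall : forall y, \sum_(i < n) Nn i u * iter i sigma y = 0.
    by move=> y; move: hne; rewrite negb_exists => /forallP /(_ y); rewrite negbK => /eqP.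
  have := @dedekind K (fun i => iter i sigma) n (fun i => iterM sigma i) (fun i => iter1 sigma i)
     iter_distinct (fun i => Nn i u) Hall 0%N hn.
  by rewrite /Nn big_ord0 => /eqP; rewrite oner_eq0.
set b := \sum_(i < n) _ in hy.
have hb : u * sigma b = b.
  rewrite /b rmorph_sum mulr_sumr.
  under eq_bigr => i _ do rewrite rmorphM mulrA NnS -iterS.
  have [n' en] : exists n', n = n'.+1 by exists n.-1; rewrite prednK.
  have hid' := hid; have hN' := hN; rewrite en in hid' hN' *.
  have N0 : Nn 0 u = 1 by rewrite /Nn big_ord0.
  rewrite big_ord_recr big_ord_recl /= hN' -iterS hid' N0 !mul1r addrC; congr (_ + _).
exists b^-1; split; first by rewrite invr_eq0.
by rewrite fmorphV invrK -{2}hb mulrCA mulVf ?mulr1 // fmorph_eq0.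
Qed.
End Hilbert.

Section Main.
Variables (K : finFieldType) (sigma : {rmorphism K -> K}) (f : {poly K}) (m : nat).
Hypotheses (hf : size f = m.+1) (hm : (1 < m)%N).
Local Notation Mf := (sf_mul sigma f (m:=m)).
Local Notation C a := (sf_const (K:=K) m a).
Let hm0 : (0 < m)%N := ltnW hm.
Let i0 : 'I_m := Ordinal hm0.
Let i1 : 'I_m := Ordinal hm.

Lemma Cl a y : Mf (C a) y = \row_i (a * y 0 i).
Proof. exact: sfCl. Qed.
Lemma Cr a y : Mf y (C a) = \row_i (y 0 i * iter i sigma a).
Proof. exact: sfCr. Qed.
Lemma C_neq0 a : a != 0 -> C a != 0.
Proof.
move=> a0; apply/eqP => /rowP /(_ i0); rewrite /sf_const !mxE coefC /=.
by move/eqP; rewrite (negbTE a0).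
Qed.

Lemma unit_neq0 (u : {unit K}) : val u != 0.
Proof. by rewrite -unitfE; case: u. Qed.

Definition wpsi (c : {unit K}) (i : 'I_m) := (val c)^-1 * iter i sigma (val c).
Definition wphi (u : {unit K}) (i : 'I_m) := Nn sigma i (val u).
Definition wL (c : {unit K}) (i : 'I_m) := val c.
Definition wR (c : {unit K}) (i : 'I_m) := iter i sigma (val c).

Lemma wpsi_neq0 c i : wpsi c i != 0.
Proof. by rewrite /wpsi mulf_neq0 // ?invr_eq0 ?iter_eq0 unit_neq0. Qed.
Lemma wphi_neq0 u i : wphi u i != 0.
Proof. by rewrite /wphi Nn_neq0 ?unit_neq0. Qed.
Lemma wL_neq0 c i : wL c i != 0.
Proof. exact: unit_neq0. Qed.
Lemma wR_neq0 c i : wR c i != 0.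
Proof. by rewrite /wR iter_eq0 unit_neq0. Qed.

Definition psi c : {perm 'rV[K]_m} := perm (scr_inj (wpsi_neq0 c)).
Definition phi u : {perm 'rV[K]_m} := perm (scr_inj (wphi_neq0 u)).
Definition Lp c : {perm 'rV[K]_m} := perm (scr_inj (wL_neq0 c)).
Definition Rp c : {perm 'rV[K]_m} := perm (scr_inj (wR_neq0 c)).

Lemma psi_morph : {in [set: {unit K}] &, {morph psi : x y / (x * y)%g >-> (x * y)%g}}.
Proof.
move=> x y _ _; apply/permP => z; rewrite permM !permE; apply/rowP => i.
rewrite !mxE /wpsi FinRing.val_unitM invfM iterM; ring.
Qed.
Canonical psiM := Morphism psi_morph.

Lemma psi_const c a : psi c (C a) = C a.
Proof.
rewrite permE; apply/rowP => i; rewrite /sf_const !mxE !coefC /wpsi.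
case: eqP => [/= ->|]; last by rewrite mulr0.
by rewrite /= mulVf ?mul1r // unit_neq0.
Qed.

Lemma psi_eq c z : psi c z = Mf (Mf (C (val c)^-1) z) (C (val c)).
Proof. by rewrite permE Cl Cr; apply/rowP => i; rewrite !mxE /wpsi; ring. Qed.

Lemma psi_LR c : psi c = (Rp c * (Lp c)^-1)%g.
Proof.
apply/permP => z; rewrite permM; apply: (@perm_inj _ (Lp c)); rewrite permKV !permE.
apply/rowP => i; rewrite !mxE /wpsi /wL /wR; field; exact: unit_neq0.
Qed.

Lemma Lp_in c : Lp c \in Lset Mf (C (val c)).
Proof. by rewrite inE; apply/forallP => y; rewrite permE Cl. Qed.
Lemma Rp_in c : Rp c \in Rset Mf (C (val c)).
Proof. by rewrite inE; apply/forallP => y; rewrite permE Cr; apply/eqP; apply/rowP => i; rewrite !mxE mulrC. Qed.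

Lemma psi_Mlt c : psi c \in Mlt Mf.
Proof.
have hx : C (val c) != 0 by rewrite C_neq0 ?unit_neq0.
rewrite psi_LR groupM ?groupV // mem_gen //; apply/bigcupP; exists (C (val c)) => //;
  rewrite inE ?Lp_in ?Rp_in ?orbT //.
Qed.


Hypothesis hnuc : forall x : 'rV[K]_m, in_nucleus Mf x <->
      exists a : K, a != 0 /\ x = C a.

Lemma CD1 (c : {unit K}) : Mf (C (val c)) (C (val c)^-1) = C 1.
Proof.
rewrite Cl; apply/rowP => i; rewrite /sf_const !mxE !coefC.
by case: eqP => _; rewrite ?mulr0 // mulfV // unit_neq0.
Qed.
Lemma DC1 (c : {unit K}) : Mf (C (val c)^-1) (C (val c)) = C 1.
Proof.
rewrite Cl; apply/rowP => i; rewrite /sf_const !mxE !coefC.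
by case: eqP => _; rewrite ?mulr0 // mulVf // unit_neq0.
Qed.
Lemma one_l y : Mf (C 1) y = y.
Proof. by rewrite Cl; apply/rowP => i; rewrite !mxE mul1r. Qed.

Lemma psi_mul c x y : psi c (Mf x y) = Mf (psi c x) (psi c y).
Proof.
have nC := nuc_all ((hnuc _).2 (ex_intro _ (val c) (conj (unit_neq0 c) erefl))).
have nD := nuc_all ((hnuc _).2 (ex_intro _ (val c)^-1
              (conj (invr_neq0 (unit_neq0 c)) erefl))).
rewrite !psi_eq.
have [_ M1 _] := nC (Mf (C (val c)^-1) x) (Mf (Mf (C (val c)^-1) y) (C (val c))).
rewrite M1.
have [_ _ R2] := nC (C (val c)) (Mf (C (val c)^-1) y).
rewrite -R2.
have [L3 _ _] := nC (C (val c)^-1) y.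
rewrite -L3 CD1 one_l.
have [_ _ R4] := nC (Mf (C (val c)^-1) x) y.
rewrite -R4.
have [L5 _ _] := nD x y.
by rewrite L5.
Qed.

Lemma psi_inner c : inner_aut Mf (sf_one K m) (psi c).
Proof.
split.
  split; last by move=> x y _ _; exact: psi_mul.
  by rewrite permE; apply/rowP => i; rewrite !mxE mulr0.
exists (C (val c)), (C (val c)^-1); split.
- by rewrite C_neq0 ?unit_neq0.
- by rewrite C_neq0 ?invr_neq0 ?unit_neq0.
- exact: DC1.
- by move=> x _; rewrite psi_eq.
Qed.

Lemma psi_mid c : mid_inner Mf (psi c).
Proof.
exists (C (val c)); split; first by rewrite C_neq0 ?unit_neq0.
move=> y _; rewrite permE Cl Cr; apply/rowP => i; rewrite !mxE /wpsi.
have := unit_neq0 c; move: (val c) => a a0; field; exact: a0.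
Qed.

Variables (q n : nat).
Hypotheses (hbij : bijective sigma) (hn : (0 < n)%N) (hid : iter n sigma =1 id)
  (hord : forall k, (0 < k < n)%N -> ~ (iter k sigma =1 id))
  (hq : #|[set x : K | sigma x == x]| = q) (hK : #|K| = (q ^ n)%N).

Lemma iter_fix a i : sigma a = a -> iter i sigma a = a.
Proof. by move=> h; elim: i => //= i ->. Qed.

Lemma ker_psi : ('ker psiM)%g = [set u : {unit K} | sigma (val u) == val u].
Proof.
apply/setP => u; rewrite !inE /=.
apply/eqP/eqP => [e|e].
  pose e1 : 'rV[K]_m := \row_i ((i == i1)%:R).
  have := congr1 (fun p : {perm 'rV[K]_m} => p e1 0 i1) e.
  rewrite permE perm1 !mxE eqxx mulr1 /wpsi /= => h.
  have u0 := unit_neq0 u.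
  by apply: (mulfI (invr_neq0 u0)); rewrite h mulVf.
apply/permP => z; rewrite permE perm1; apply/rowP => i.
by rewrite !mxE /wpsi iter_fix // mulVf ?mul1r // unit_neq0.
Qed.

Lemma card_fixunits :
  #|[set u : {unit K} | sigma (val u) == val u]| = #|[set x : K | sigma x == x]|.-1.
Proof.
have -> : #|[set x : K | sigma x == x]| = #|[set x : K | sigma x == x] :\ 0|.+1.
  by rewrite (cardsD1 0) inE rmorph0 eqxx.
rewrite /= -(card_imset _ val_inj); apply: eq_card => x.
rewrite !inE; apply/imsetP/andP => [[u]|[x0 hx]].
  by rewrite inE => hu ->; rewrite unit_neq0.
have ux : x \is a GRing.unit by rewrite unitfE.
by exists (FinRing.unit K ux); rewrite ?inE.
Qed.

Definition G := (psiM @* [set: {unit K}])%G.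

Lemma card_G : #|G| = ((q ^ n).-1 %/ q.-1)%N.
Proof.
rewrite /G card_morphim setIid -hK -card_finField_unit -hq -card_fixunits -ker_psi.
by rewrite -(Lagrange (subsetT (('ker psiM)%g))) mulKn ?cardG_gt0.
Qed.

Lemma memG p : p \in G -> exists c, p = psi c.
Proof. by rewrite /G /= morphimEdom => /imsetP [c _ ->]; exists c. Qed.

Lemma cyclic_G : cyclic G.
Proof. exact: morphim_cyclic (field_unit_group_cyclic _). Qed.

Lemma phi_morph : {in kerN sigma n &, {morph phi : u v / (u * v)%g >-> (u * v)%g}}.
Proof.
move=> x y _ _; apply/permP => z; rewrite permM !permE; apply/rowP => i.
rewrite !mxE /wphi FinRing.val_unitM NnM; ring.
Qed.

Lemma phi_inj : {in kerN sigma n &, injective phi}.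
Proof.
move=> u v _ _ e.
pose e1 : 'rV[K]_m := \row_i ((i == i1)%:R).
have := congr1 (fun p : {perm 'rV[K]_m} => p e1 0 i1) e.
rewrite !permE !mxE eqxx !mulr1 /wphi /= !Nn1 => h.
exact: val_inj.
Qed.

Lemma phi_psi (u c : {unit K}) : sigma (val c) / val c = val u -> phi u = psi c.
Proof.
move=> h; apply/permP => z; rewrite !permE; apply/rowP => i.
rewrite !mxE /wphi /wpsi -h Nn_tele; last exact: unit_neq0.
by rewrite [X in X * _ = _]mulrC.
Qed.

Lemma phi_G : phi @: kerN sigma n = G.
Proof.
rewrite /G /= morphimEdom; apply/setP => p; apply/imsetP/imsetP => [[u hu ->]|[c _ ->]].
  move: hu; rewrite inE => /eqP hu.
  have [c [c0 hc]] := hilbert90 hbij hn hid hord hu.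
  have uc : c \is a GRing.unit by rewrite unitfE.
  exists (FinRing.unit K uc); first by rewrite inE.
  exact: phi_psi.
have uc : sigma (val c) / val c \is a GRing.unit.
  by rewrite unitfE mulf_neq0 ?invr_eq0 ?fmorph_eq0 ?unit_neq0.
exists (FinRing.unit K uc); last by rewrite (phi_psi (c:=c)).
rewrite inE; apply/eqP; rewrite /=.
rewrite (_ : sknorm sigma n _ = Nn sigma n (sigma (val c) / val c)) //.
rewrite Nn_tele; last exact: unit_neq0.
by rewrite hid mulfV // unit_neq0.
Qed.

End Main.

Unset Implicit Arguments.

Theorem mainTheorem3 (K : finFieldType) (sigma : {rmorphism K -> K})
    (q n m : nat) (f : {poly K}) :
  bijective sigma ->
  (1 < n)%N ->
  iter n sigma =1 id ->
  (forall k, (0 < k < n)%N -> ~ (iter k sigma =1 id)) ->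
  #|[set x : K | sigma x == x]| = q ->
  #|K| = (q ^ n)%N ->
  f \is monic -> size f = m.+1 -> (2 <= m)%N ->
  sk_irreducible sigma f -> ~ right_invariant sigma f ->
  (m.-1 <= n)%N ->
  (forall x : 'rV[K]_m, in_nucleus (sf_mul sigma f (m:=m)) x <->
      exists a : K, a != 0 /\ x = sf_const m a) ->
  exists G : {group {perm 'rV[K]_m}},
    [/\ #|G| = ((q ^ n).-1 %/ q.-1)%N,
        forall p : {perm 'rV[K]_m}, p \in G ->
          [/\ inner_aut (sf_mul sigma f (m:=m)) (sf_one K m) p,
              (forall a : K, a != 0 -> p (sf_const m a) = sf_const m a) &
              mid_inner (sf_mul sigma f (m:=m)) p],
        G \subset Inn (sf_mul sigma f (m:=m)) (sf_one K m),
        cyclic G &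
        exists phi : {unit K} -> {perm 'rV[K]_m},
          [/\ {in kerN sigma n &, {morph phi : u v / (u * v)%g >-> (u * v)%g}},
              {in kerN sigma n &, injective phi} &
              phi @: kerN sigma n = G]].
Proof.
move=> hbij hn hid hord hq hK _ hf hm _ _ _ hnuc.
have hn0 : (0 < n)%N by apply: ltnW.
exists (G sigma m); split.
- exact: (card_G hm hq hK).
- move=> p /memG [c ->]; split.
  + exact: (psi_inner hf hm hnuc).
  + by move=> a _; rewrite psi_const.
  + exact: (psi_mid sigma hf hm).
- apply/subsetP => p /memG [c ->]; rewrite inE; apply/andP; split.
    exact: (psi_Mlt sigma hf hm).
  by rewrite /sf_one psi_const.
- exact: cyclic_G.
- exists (phi sigma m); split.
  + exact: phi_morph.
  + exact: (phi_inj hm).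
  + exact: (phi_G m hbij hn0 hid hord).
Qed.
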